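(* In the setting described in the context, assume $q$ is a square and let $v\ge1$ be an integer such that $d=v(q+\sqrt q+1)$ divides $q^2+q+1$, and let $t=(q^2+q+1)/d$. Then $t=\frac{q-\sqrt q+1}{v}$, $w_0=\sqrt q+v$, and $w_1=\dots=w_{t-1}=v$.
   Context: Let $q=p^h$ with $p$ prime, $h\ge1$. Let $\alpha$ be a primitive element of $\mathbb{F}_{q^3}$; the points of $PG(2,q)$ are the 1-dimensional $\mathbb{F}_q$-subspaces of $\mathbb{F}_{q^3}$, and $P_i$ denotes the point represented by $\alpha^i$, so $PG(2,q)=\{P_0,\dots,P_{q^2+q}\}$. Let $\tau:P_i\mapsto P_{ip\bmod(q^2+q+1)}$ (a collineation) and let $\ell_0$ be a line of $PG(2,q)$ fixed by $\tau$. For a positive divisor $t$ of $q^2+q+1$ and $i=0,\dots,t-1$ let $O_i=\{P_u:u\equiv i\pmod t\}$, and for $u=0,\dots,t-1$ let $w_u=|\ell_0\cap O_u|$. *)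

(* Defs.v *)
From mathcomp Require Import all_boot all_algebra all_field.
Set Implicit Arguments. Unset Strict Implicit. Unset Printing Implicit Defensive.
Import GRing.Theory.
Local Open Scope ring_scope.

(* F is a field of order q^3; F_q is the subfield {x | x^q = x}. *)
Definition in_Fq (F : finFieldType) (q : nat) (x : F) : bool := x ^+ q == x.

(* L is a 2-dimensional F_q-subspace of F (an F_q-subspace with q^2 elements),
   i.e. a line of PG(2,q) in the model F_{q^3}. *)
Definition is_Fq_plane (F : finFieldType) (q : nat) (L : {set F}) : Prop :=
  [/\ 0 \in L,
      {in L &, forall x y, x + y \in L},
      (forall c x : F, in_Fq q c -> x \in L -> c * x \in L)
    & #|L| = (q ^ 2)%N].

(* The points P_i (0 <= i <= q^2+q) lying on the line with underlying
   subspace L, P_i being represented by a^i. *)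
Definition line_pts (F : finFieldType) (q : nat) (a : F) (L : {set F})
  : {set 'I_(q ^ 2 + q + 1)} :=
  [set i : 'I_(q ^ 2 + q + 1) | a ^+ i \in L].

Definition tau_fixed (p N : nat) (S : {set 'I_N}) : Prop :=
  [set i : 'I_N | [exists j in S, (i : nat) == ((j * p) %% N)%N]] = S.

(* w_u = |S cap O_u| where O_u = {P_i : i = u mod t}. *)
Definition wcount (N t : nat) (S : {set 'I_N}) (u : nat) : nat :=
  #|[set i in S | ((i : nat) %% t == u)%N]|.

(* Main.v *)
Require Import Defs.
From mathcomp Require Import all_boot all_algebra all_field.
From mathcomp Require Import zify ring.
Set Implicit Arguments. Unset Strict Implicit. Unset Printing Implicit Defensive.
Import GRing.Theory.
Local Open Scope ring_scope.

Lemma count_res (n t v u : nat) : n = (t * v)%N -> (u < t)%N ->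
  #|[set c : 'I_n | (c %% t == u)%N]| = v.
Proof.
move=> nE ut.
have t0 : (0 < t)%N by apply: leq_ltn_trans ut.
have lt (j : 'I_v) : (u + t * j < n)%N.
  by rewrite nE; have := ltn_ord j; nia.
pose g := fun j : 'I_v => Ordinal (lt j).
have ginj : injective g.
  move=> j j' /(congr1 val) /= /addnI /eqP; rewrite eqn_pmul2l // => /eqP.
  exact: val_inj.
rewrite -[v in RHS]card_ord -cardsT -(card_imset _ ginj).
apply: eq_card => c; rewrite !inE; apply/idP/imsetP.
  move=> /eqP cu.
  have cv : (c %/ t < v)%N by rewrite ltn_divLR // mulnC -nE.
  exists (Ordinal cv) => //; apply: val_inj => /=.
  by rewrite {1}(divn_eq c t) cu addnC mulnC.
by move=> [j _ ->] /=; rewrite addnC mulnC modnMDl modn_small.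
Qed.

Section Prop7.
Variables (p k r : nat) (F : finFieldType) (alpha : F) (L : {set F}).
Hypothesis pr_p : prime p.
Hypothesis k_gt0 : (0 < k)%N.
Hypothesis r_def : r = (p ^ k)%N.
Local Notation q := (r ^ 2)%N.
Local Notation N := (q ^ 2 + q + 1)%N.
Local Notation Q := (q ^ 3 - 1)%N.
Local Notation m := (q - r + 1)%N.
Hypothesis cardF : #|F| = (q ^ 3)%N.
Hypothesis prim : Q.-primitive_root alpha.
Hypothesis plane : is_Fq_plane q L.

Lemma r_ge2 : (2 <= r)%N.
Proof.
rewrite r_def; have p2 := prime_gt1 pr_p.
by rewrite (leq_trans p2) // -{1}(expn1 p) leq_pexp2l // ltnW.
Qed.

Lemma Q_eq : Q = (N * (q - 1))%N.
Proof. have := r_ge2; nia. Qed.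
Lemma Q_eq3 : Q = ((r^3 + 1) * (r^3 - 1))%N.
Proof. have := r_ge2; nia. Qed.
Lemma Q_eq1 : Q = ((r^5 + r^4 + r^3 + r^2 + r + 1) * (r - 1))%N.
Proof. have := r_ge2; nia. Qed.
Lemma N_eq : N = ((q + r + 1) * m)%N.
Proof. have := r_ge2; nia. Qed.
Lemma r3_eq : (r^3 + 1 = (r + 1) * m)%N.
Proof. have := r_ge2; nia. Qed.
Lemma m_gt0 : (0 < m)%N. Proof. by rewrite addn1. Qed.
Lemma N_gt0 : (0 < N)%N. Proof. by rewrite addn1. Qed.
Lemma Q_gt0 : (0 < Q)%N. Proof. have := r_ge2; nia. Qed.
Lemma q3_eq : (q ^ 3 = Q.+1)%N. Proof. have := r_ge2; nia. Qed.
Lemma q_ge2 : (2 <= q)%N. Proof. have := r_ge2; nia. Qed.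

Lemma pF : p \in [pchar F].
Proof.
apply: (card_finPcharP (n := (k * 2 * 3)%N)) => //.
by rewrite cardF r_def -!expnM mulnA.
Qed.

Lemma pnat_pe e : [pchar F].-nat (p ^ e)%N.
Proof.
rewrite (eq_pnat _ (pcharf_eq pF)) pnatX; case: e => [|e]; first by rewrite orbT.
by rewrite pnat_id.
Qed.

Lemma frobD e (x y : F) : (x + y) ^+ (p ^ e) = x ^+ (p ^ e) + y ^+ (p ^ e).
Proof. exact: exprDn_pchar (pnat_pe e). Qed.
Lemma frobN e (x : F) : (- x) ^+ (p ^ e) = - x ^+ (p ^ e).
Proof. exact: exprNn_pchar (pnat_pe e). Qed.
Lemma frobB e (x y : F) : (x - y) ^+ (p ^ e) = x ^+ (p ^ e) - y ^+ (p ^ e).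
Proof. by rewrite frobD frobN. Qed.


Lemma aQ : alpha ^+ Q = 1. Proof. exact: prim_expr_order prim. Qed.

Lemma alpha_ne0 : alpha != 0.
Proof.
apply/eqP => a0; have := aQ; rewrite a0 expr0n.
by rewrite eqn0Ngt Q_gt0 /= => /eqP; rewrite eq_sym oner_eq0.
Qed.

Lemma apow_ne0 e : alpha ^+ e != 0.
Proof. by rewrite expf_neq0 // alpha_ne0. Qed.

Lemma aeq a b : (alpha ^+ a == alpha ^+ b) = (a == b %[mod Q]).
Proof. have := eq_prim_root_expr prim a b. done. Qed.

Lemma xQ (x : F) : x != 0 -> x ^+ Q = 1.
Proof.
move=> x0; have := expf_card x; have -> : #|F| = Q.+1 by rewrite cardF; exact: q3_eq.
rewrite exprS => /(congr1 (fun y => x^-1 * y)).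
by rewrite mulrA mulVf // mul1r.
Qed.

Definition lg (x : F) : nat :=
  if [pick i : 'I_Q | alpha ^+ i == x] is Some i then val i else 0%N.

Lemma lgK x : x != 0 -> alpha ^+ (lg x) = x.
Proof.
move=> x0; have [i ->] := prim_rootP prim (xQ x0).
rewrite /lg; case: pickP => [j /eqP //|/(_ i)]; by rewrite eqxx.
Qed.

Lemma q_pe : q = (p ^ (k * 2))%N. Proof. by rewrite r_def expnM. Qed.

Lemma inFqD (x y : F) : in_Fq q x -> in_Fq q y -> in_Fq q (x + y).
Proof. by rewrite /in_Fq q_pe frobD => /eqP-> /eqP->. Qed.
Lemma inFqN (x : F) : in_Fq q x -> in_Fq q (- x).
Proof. by rewrite /in_Fq q_pe frobN => /eqP->. Qed.
Lemma inFqB (x y : F) : in_Fq q x -> in_Fq q y -> in_Fq q (x - y).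
Proof. by move=> ? ?; rewrite inFqD ?inFqN. Qed.
Lemma inFqM (x y : F) : in_Fq q x -> in_Fq q y -> in_Fq q (x * y).
Proof. by rewrite /in_Fq exprMn => /eqP-> /eqP->. Qed.
Lemma inFqV (x : F) : in_Fq q x -> in_Fq q (x^-1).
Proof. by rewrite /in_Fq exprVn => /eqP->. Qed.
Lemma inFq1 : in_Fq q (1 : F). Proof. by rewrite /in_Fq expr1n. Qed.
Lemma inFqX (x : F) n : in_Fq q x -> in_Fq q (x ^+ n).
Proof. by rewrite /in_Fq -exprM mulnC exprM => /eqP->. Qed.

Lemma inFq_aN : in_Fq q (alpha ^+ N).
Proof.
apply/eqP; rewrite -exprM; apply/eqP; rewrite aeq.
have -> : (N * q = N + Q)%N by rewrite Q_eq; have := r_ge2; nia.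
by rewrite -modnDmr modnn addn0.
Qed.

Lemma L0 : 0 \in L. Proof. by case: plane. Qed.
Lemma LD (x y : F) : x \in L -> y \in L -> x + y \in L.
Proof. by case: plane => _ H _ _; apply: H. Qed.
Lemma LZ (c x : F) : in_Fq q c -> x \in L -> c * x \in L.
Proof. by case: plane => _ _ H _; apply: H. Qed.
Lemma cardL : #|L| = (q ^ 2)%N. Proof. by case: plane. Qed.
Lemma LN (x : F) : x \in L -> - x \in L.
Proof. by move=> xL; rewrite -mulN1r LZ // inFqN // inFq1. Qed.
Lemma LB (x y : F) : x \in L -> y \in L -> x - y \in L.
Proof. by move=> ? ?; rewrite LD ?LN. Qed.

Lemma aNk_split (e : nat) : alpha ^+ e = alpha ^+ (e %% N)%N * (alpha ^+ N) ^+ (e %/ N)%N.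
Proof. by rewrite -exprM -exprD addnC mulnC -divn_eq. Qed.

Lemma L_mod (e : nat) : (alpha ^+ e \in L) = (alpha ^+ (e %% N)%N \in L).
Proof.
apply/idP/idP => H; last by rewrite aNk_split mulrC LZ // inFqX // inFq_aN.
have -> : alpha ^+ (e %% N) = (alpha ^+ N) ^+ ((q - 2) * (e %/ N)) * alpha ^+ e.
  apply/eqP; rewrite -exprM -exprD aeq.
  have -> : (N * ((q - 2) * (e %/ N)) + e = (e %/ N) * Q + e %% N)%N.
    have := divn_eq e N; move: (e %/ N)%N (e %% N)%N => a b He.
    rewrite {1}He Q_eq; have := q_ge2; nia.
  by rewrite modnMDl.
by rewrite LZ // inFqX // inFq_aN.
Qed.

Lemma modEq (e1 e2 : nat) : (e1 %% N = e2 %% N)%N ->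
  exists2 c, in_Fq q c & alpha ^+ e1 = c * alpha ^+ e2.
Proof.
move=> E; exists ((alpha ^+ N) ^+ (e1 %/ N)%N / (alpha ^+ N) ^+ (e2 %/ N)%N).
  by apply: inFqM; [|apply: inFqV]; apply: inFqX; apply: inFq_aN.
rewrite (aNk_split e1) (aNk_split e2) E.
have A0 : (alpha ^+ N) ^+ (e2 %/ N)%N != 0 by rewrite -exprM apow_ne0.
move: A0; set A2 := _ ^+ (e2 %/ N)%N; set A1 := _ ^+ (e1 %/ N)%N; move=> A0.
by field.
Qed.

Lemma samePt (c : F) (e1 e2 : nat) : in_Fq q c -> alpha ^+ e1 = c * alpha ^+ e2 ->
  (e1 %% N = e2 %% N)%N.
Proof.
move=> cq E.
have c0 : c != 0 by apply/eqP => c0; move: (apow_ne0 e1); rewrite E c0 mul0r eqxx.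
have Nd : (N %| lg c)%N.
  move: cq; rewrite /in_Fq; set g := lg c.
  rewrite -(lgK c0) -/g -exprM aeq eqn_mod_dvd; last first.
    by rewrite leq_pmulr // (leq_trans _ q_ge2).
  rewrite -{2}(muln1 g) -mulnBr Q_eq dvdn_pmul2r //.
  by have := q_ge2; lia.
move: E; rewrite -(lgK c0) -exprD => /eqP; rewrite aeq => /eqP E.
have NQ : (N %| Q)%N by rewrite Q_eq dvdn_mulr.
have := congr1 (fun x => x %% N)%N E; rewrite /= !modn_dvdm //.
by case/dvdnP: Nd => j ->; rewrite modnMDl.
Qed.


Definition S := [set i : 'I_N | alpha ^+ i \in L].

Lemma q1_gt0 : (0 < q - 1)%N. Proof. by have := q_ge2; lia. Qed.

Lemma cardS : #|S| = (q + 1)%N.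
Proof.
pose g := fun u : 'I_N * 'I_(q - 1) => alpha ^+ (u.1 + N * u.2)%N.
have ginj : injective g.
  move=> [i j] [i' j'] /eqP; rewrite /g /= aeq.
  have lt1 : (i + N * j < Q)%N.
    by rewrite Q_eq; have := ltn_ord i; have := ltn_ord j; nia.
  have lt2 : (i' + N * j' < Q)%N.
    by rewrite Q_eq; have := ltn_ord i'; have := ltn_ord j'; nia.
  rewrite !modn_small // => /eqP E.
  have Ei : (i : nat) = i'.
    have := congr1 (fun x => x %% N)%N E.
    by rewrite /= ![(N * _)%N]mulnC ![(_ + _ * N)%N]addnC !modnMDl !modn_small.
  have Ej : (j : nat) = j'.
    move: E; rewrite Ei => /addnI /eqP; rewrite eqn_pmul2l ?N_gt0 //; exact/eqP.
  by congr pair; apply: val_inj.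
have img : g @: (setX S setT) = L :\ 0.
  apply/eqP; rewrite eqEsubset; apply/andP; split.
    apply/subsetP => x /imsetP [[i j]]; rewrite inE /= in_setT andbT inE => iS ->.
    rewrite !inE apow_ne0 /= L_mod mulnC addnC modnMDl modn_small //.
  apply/subsetP => x; rewrite !inE => /andP [x0 xL].
  pose e := (lg x %% Q)%N.
  have ex : alpha ^+ e = x by rewrite /e prim_expr_mod // lgK.
  have eQ : (e < Q)%N by rewrite /e ltn_mod Q_gt0.
  have lt2 : (e %/ N < q - 1)%N by rewrite ltn_divLR ?N_gt0 // mulnC -Q_eq.
  apply/imsetP; exists (Ordinal (ltn_pmod e N_gt0), Ordinal lt2).
    by rewrite !inE /= -L_mod ex xL.
  by rewrite /g /= mulnC addnC -divn_eq ex.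
have := card_imset (setX S setT) ginj; rewrite img cardsX cardsT card_ord.
move=> E; have := cardsD1 0 L; rewrite L0 cardL E add1n => /eqP.
move=> H; apply/eqP; rewrite -(eqn_pmul2r q1_gt0); apply/eqP.
have := q_ge2; nia.
Qed.


Lemma roots_card (a b : nat) : (a * (b - 1) = Q)%N -> (1 <= b)%N ->
  (b <= #|[set y : F | y ^+ b == y]|)%N.
Proof.
move=> abQ b1.
have a0 : (0 < a)%N by move: Q_gt0; rewrite -abQ muln_gt0 => /andP[].
pose f := fun o : option 'I_(b - 1) =>
  if o is Some s then alpha ^+ (a * s)%N else 0.
have finj : injective f.
  have lt (s : 'I_(b - 1)) : (a * s < Q)%N by rewrite -abQ ltn_pmul2l.
  move=> [s|] [s'|] //= E.
  - move: E => /eqP; rewrite aeq !modn_small ?lt // eqn_pmul2l // => /eqP E.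
    by congr Some; apply: val_inj.
  - by move: (apow_ne0 (a * s)); rewrite E eqxx.
  - by move: (apow_ne0 (a * s')); rewrite E eqxx.
have := card_imset [set: option 'I_(b - 1)] finj.
rewrite cardsT card_option card_ord => E.
apply: (@leq_trans (b - 1).+1); first by rewrite subn1 prednK.
rewrite -E.
apply: subset_leq_card; apply/subsetP => y /imsetP [[s|] _ ->]; rewrite inE /=.
  rewrite -exprM aeq.
  have -> : (a * s * b = (a * s) + s * Q)%N.
    by rewrite -abQ; have := b1; nia.
  by rewrite -modnDmr modnMl addn0.
by rewrite expr0n; case: (b) b1.
Qed.

Definition T := [set y : F | y ^+ (r ^ 3) == y].
Definition Fr := [set y : F | y ^+ r == y].

Lemma cardT_ge : (r ^ 3 <= #|T|)%N.
Proof. apply: roots_card; first by rewrite Q_eq3. by rewrite expn_gt0 (leq_trans _ r_ge2). Qed.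

Lemma cardFr_ge : (r <= #|Fr|)%N.
Proof. apply: roots_card; first by rewrite Q_eq1. exact: (leq_trans _ r_ge2). Qed.

Lemma r3_pe : (r ^ 3 = p ^ (k * 3))%N. Proof. by rewrite r_def expnM. Qed.

Lemma TB y z : y \in T -> z \in T -> y - z \in T.
Proof. by rewrite !inE r3_pe frobB => /eqP-> /eqP->. Qed.
Lemma TD y z : y \in T -> z \in T -> y + z \in T.
Proof. by rewrite !inE r3_pe frobD => /eqP-> /eqP->. Qed.

Lemma FrT x : x \in Fr -> x \in T.
Proof.
rewrite !inE => /eqP xr; apply/eqP.
by rewrite expnS exprM xr expnS exprM xr expn1 xr.
Qed.

Lemma FrFq x : x \in Fr -> in_Fq q x.
Proof. by rewrite !inE /in_Fq => /eqP xr; rewrite expnS exprM xr expn1 xr. Qed.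

Lemma aT s : alpha ^+ ((r ^ 3 + 1) * s)%N \in T.
Proof.
rewrite inE -exprM aeq.
have -> : ((r ^ 3 + 1) * s * r ^ 3 = (r ^ 3 + 1) * s + s * Q)%N.
  by rewrite Q_eq3; have := r_ge2; nia.
by rewrite -modnDmr modnMl addn0.
Qed.

Lemma T_nz y : y \in T -> y != 0 -> (m %| lg y)%N.
Proof.
move=> + y0; rewrite inE; set g := lg y; rewrite -(lgK y0) -/g -exprM aeq.
have r3 : (1 < r ^ 3)%N by have := r_ge2; nia.
rewrite eqn_mod_dvd; last by rewrite leq_pmulr // ltnW.
rewrite -{2}(muln1 g) -mulnBr Q_eq3 dvdn_pmul2r; last by rewrite subn_gt0.
by apply: dvdn_trans; rewrite r3_eq dvdn_mull.
Qed.

Lemma prod_card (A B : {set F}) :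
  (forall x y, x \in A -> y \in A -> x - y \in A) ->
  (forall x y, x \in B -> y \in B -> x - y \in B) ->
  (#|A| * #|B| <= #|F| * #|A :&: B|)%N.
Proof.
move=> Asub Bsub.
rewrite -cardsX -sum1_card (partition_big (fun u : F * F => u.1 + u.2) predT) //=.
rewrite -sum_nat_const; apply: leq_sum => w _.
rewrite sum1dep_card.
set Bw := [set _ | _].
have [->|[u0 u0B]] := set_0Vmem Bw; first by rewrite cards0.
pose f := fun u : F * F => u.1 - u0.1.
move: u0B; rewrite inE => /andP [u0X /eqP u0w].
rewrite -(card_in_imset (f := f)); last first.
  move=> u v; rewrite !inE => /andP [_ /eqP uw] /andP [_ /eqP vw] /eqP.
  rewrite /f subr_eq subrK => /eqP E.
  move: u v uw vw E => [u1 u2] [v1 v2] /= uw vw E; subst v1.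
  by congr pair; apply: (addrI u1); rewrite uw vw.
apply: subset_leq_card; apply/subsetP => z /imsetP [u]; rewrite !inE.
move=> /andP [/andP [u1A u2B] /eqP uw] ->.
move: u0X; rewrite inE => /andP [u01A u02B].
rewrite /f Asub //=.
have -> : u.1 - u0.1 = u0.2 - u.2.
  rewrite (_ : u.1 = w - u.2); last by rewrite -uw addrK.
  rewrite (_ : u0.1 = w - u0.2); last by rewrite -u0w addrK.
  ring.
by rewrite Bsub.
Qed.


Lemma mN : (m %| N)%N. Proof. by rewrite N_eq dvdn_mull. Qed.

Definition P (c : nat) := [set i in S | (i %% m == c)%N].

Lemma exists_pt (c : nat) : (c < m)%N -> (0 < #|P c|)%N.
Proof.
move=> cm.
pose M := (fun z => alpha ^+ c * z) @^-1: L.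
have cM : #|M| = (q ^ 2)%N.
  rewrite card_preimset ?cardL //; apply: mulfI; exact: apow_ne0.
have Msub x y : x \in M -> y \in M -> x - y \in M.
  by rewrite !inE mulrBr; apply: LB.
have H := prod_card TB Msub.
have rTM : (r <= #|T :&: M|)%N.
  rewrite -(@leq_pmul2l (r ^ 6)); last by rewrite expn_gt0 (leq_trans _ r_ge2).
  have E6 : (q ^ 3 = r ^ 6)%N by rewrite -expnM.
  rewrite cardF E6 in H; apply: (leq_trans _ H).
  rewrite cM -expnM.
  have -> : (r ^ 6 * r = r ^ 3 * r ^ (2 * 2))%N by rewrite -expnSr -expnD.
  by rewrite leq_mul2r cardT_ge orbT.
have : (0 < #|(T :&: M) :\ (0%R : F)|)%N.
  move: rTM; rewrite (cardsD1 (0%R : F)); have := r_ge2.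
  have := leq_b1 ((0%R : F) \in T :&: M); lia.
rewrite card_gt0 => /set0Pn [y] /setD1P [y0 /setIP [yT]]; rewrite inE /= => yM.
have my := T_nz yT y0.
apply/card_gt0P; exists (Ordinal (ltn_pmod (c + lg y) N_gt0)).
rewrite !inE /= -L_mod exprD lgK // yM /=.
rewrite modn_dvdm ?mN //; case/dvdnP: my => j ->.
by rewrite addnC modnMDl modn_small.
Qed.


Lemma gcd_r3N : gcdn (r ^ 3 + 1) N = m.
Proof.
rewrite r3_eq N_eq -muln_gcdl.
have -> : (q + r + 1 = r * (r + 1) + 1)%N by rewrite mulnDr muln1 expnS expn1.
by rewrite gcdnMDl gcdn1 mul1n.
Qed.

Lemma big_pt c : (1 < #|P c|)%N -> (r + 1 <= #|P c|)%N.
Proof.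
suff key : forall i1 i2 : 'I_N, i1 \in P c -> i2 \in P c -> (i1 < i2)%N ->
    (r + 1 <= #|P c|)%N.
  case/card_gt1P => i1 [i2 [H1 H2 ne]].
  case: (ltngtP i1 i2) => [lt|lt|/val_inj E]; [exact: key lt|exact: key lt|].
  by rewrite E eqxx in ne.
move=> i1 i2; rewrite !inE => /andP [i1S /eqP i1c] /andP [i2S /eqP i2c] lt12.
have mdv : (m %| i2 - i1)%N.
  by rewrite -eqn_mod_dvd; [rewrite i1c i2c | exact: ltnW].
set j := ((i2 - i1) %/ m)%N.
have i2e : ((i2 : nat) = i1 + m * j)%N.
  by rewrite /j mulnC divnK // subnKC //; exact: ltnW.
have r3pos : (0 < r ^ 3 + 1)%N by rewrite addn1.
case: (@egcdnP (r ^ 3 + 1) N r3pos) => km kn Ekm _.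
rewrite gcd_r3N in Ekm.
pose y := alpha ^+ ((r ^ 3 + 1) * (km * j)).
have yT : y \in T := aT _.
have x0 : alpha ^+ i1 != 0 := apow_ne0 _.
have xL : alpha ^+ i1 \in L by [].
pose A := (alpha ^+ N) ^+ (kn * j).
have A0 : A != 0 by rewrite /A -exprM apow_ne0.
have Aq : in_Fq q A by rewrite /A inFqX // inFq_aN.
have xyE : alpha ^+ i1 * y = A * alpha ^+ i2.
  rewrite /y /A -exprD -exprM -exprD; congr (_ ^+ _).
  rewrite i2e mulnA [(_ * km)%N]mulnC Ekm; ring.
have xyL : alpha ^+ i1 * y \in L.
  by rewrite xyE LZ.
have yq : ~~ in_Fq q y.
  apply/negP => yq.
  have E : alpha ^+ i2 = (A^-1 * y) * alpha ^+ i1.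
    by rewrite -mulrA [y * _]mulrC xyE mulrA mulVf ?mul1r.
  have := samePt (inFqM (inFqV Aq) yq) E.
  rewrite !modn_small // => E2; by rewrite E2 ltnn in lt12.
pose idx := fun l : F => Ordinal (ltn_pmod (i1 + lg (l + y)) N_gt0).
have ly0 l : l \in Fr -> l + y != 0.
  move=> lF; apply: contraNneq yq => E.
  have -> : y = - l by apply/eqP; rewrite -addr_eq0 addrC E.
  exact/inFqN/FrFq.
have xly l : l \in Fr -> alpha ^+ (i1 + lg (l + y)) = alpha ^+ i1 * (l + y).
  by move=> lF; rewrite exprD lgK ?ly0.
have idxP l : l \in Fr -> idx l \in P c.
  move=> lF; rewrite !inE /= -L_mod xly // mulrDr LD //; last first.
    by rewrite mulrC LZ // FrFq.
  rewrite /= modn_dvdm ?mN //.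
  case/dvdnP: (T_nz (TD (FrT lF) yT) (ly0 l lF)) => j' ->.
  by rewrite addnC modnMDl i1c.
have idx_ne l : l \in Fr -> idx l != i1.
  move=> lF; apply/eqP => /(congr1 val) /= E.
  have E' : ((i1 + lg (l + y)%R) %% N = i1 %% N)%N by rewrite E modn_small.
  case: (modEq E') => c0 c0q; rewrite xly // mulrC => /(mulIf x0) Ec.
  move: yq; rewrite (_ : y = c0 - l); last by rewrite -Ec addrC addKr.
  by rewrite inFqB // FrFq.
have idx_inj : {in Fr &, injective idx}.
  move=> l l' lF l'F /(congr1 val) /= E.
  case: (modEq E) => c0 c0q; rewrite !xly // => Ec.
  have E2 : l + y = c0 * (l' + y).
    by apply: (mulfI x0); rewrite Ec mulrCA.
  have [c1|c1] := eqVneq c0 1.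
    by move: E2; rewrite c1 mul1r => /addIr.
  have c10 : 1 - c0 != 0 by rewrite subr_eq0 eq_sym.
  have Ey : y = (c0 * l' - l) / (1 - c0).
    apply: (mulIf c10); rewrite divfK //.
    rewrite (_ : c0 * l' = l + y - c0 * y); last by rewrite E2 mulrDr addrK.
    ring.
  have : in_Fq q y.
    rewrite Ey; apply: inFqM; last by apply/inFqV/inFqB => //; exact: inFq1.
    by apply: inFqB; [apply: inFqM => //|]; exact: FrFq.
  by rewrite (negbTE yq).
have sub : i1 |: (idx @: Fr) \subset P c.
  apply/subsetP => i /setU1P [->|/imsetP [l lF ->]]; last exact: idxP.
  by rewrite !inE i1S i1c eqxx.
apply: leq_trans (subset_leq_card sub).
rewrite cardsU1 card_in_imset //.
have -> : i1 \notin idx @: Fr.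
  by apply/imsetP => [[l lF E]]; move: (idx_ne l lF); rewrite -E eqxx.
by rewrite add1n addn1 ltnS cardFr_ge.
Qed.


Lemma coprime_pN : coprime p N.
Proof.
rewrite prime_coprime //; apply/negP => pN.
have pq : (p %| q)%N by rewrite q_pe dvdn_exp ?muln_gt0 ?k_gt0 ?dvdnn.
have H : (p %| q ^ 2 + q)%N by rewrite dvdn_add // dvdn_exp.
move: pN; rewrite (dvdn_addr _ H) dvdn1 => /eqP p1.
by move: (prime_gt1 pr_p); rewrite p1.
Qed.

Lemma tau_le c : tau_fixed p S -> (#|P c| <= #|P ((c * p) %% m)|)%N.
Proof.
move=> tf.
pose tp := fun i : 'I_N => Ordinal (ltn_pmod (i * p) N_gt0).
have tinj : injective tp.
  case: (@egcdnP p N (prime_gt0 pr_p)) => km kn Ekm _.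
  rewrite (eqP coprime_pN) in Ekm.
  move=> i j /(congr1 val) /= E.
  have Hi (x : nat) : (x * p %% N * km %% N = x %% N)%N.
    by rewrite modnMml -mulnA [(p * km)%N]mulnC Ekm mulnDr mulnA muln1 modnMDl.
  have := Hi i; rewrite E Hi !modn_small // => Eji.
  by apply: val_inj.
have tS i : i \in S -> tp i \in S.
  by move=> iS; rewrite -tf inE; apply/existsP; exists i; rewrite iS eqxx.
rewrite -(card_imset (P c) tinj); apply: subset_leq_card.
apply/subsetP => x /imsetP [i]; rewrite in_set => /andP [iS /eqP ic] ->.
rewrite in_set tS //=.
by rewrite modn_dvdm ?mN // -modnMml ic.
Qed.

Lemma coprime_mp : coprime m (p - 1).
Proof.
have pe e : exists X, (p ^ e = 1 + (p - 1) * X)%N.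
  elim: e => [|e [X HX]]; first by exists 0%N; rewrite muln0.
  exists (1 + p * X)%N; rewrite expnS HX; have := prime_gt0 pr_p; nia.
have [X HX] := pe k; rewrite -r_def in HX.
have -> : (m = (r * X) * (p - 1) + 1)%N.
  have := r_ge2; rewrite HX; nia.
by rewrite /coprime gcdnC gcdnMDl gcdn1.
Qed.

Lemma sumP : (\sum_(c < m) #|P c| = #|S|)%N.
Proof.
rewrite -sum1_card (partition_big (fun i : 'I_N => Ordinal (ltn_pmod i m_gt0)) predT) //=.
apply: eq_bigr => c _; rewrite sum1dep_card; apply: eq_card => i.
by rewrite !inE.
Qed.

Lemma sum_ind (n c a : nat) : (c < n)%N -> (\sum_(i < n) ((i == c :> nat) * a) = a)%N.
Proof.
move=> cn; rewrite (bigD1 (Ordinal cn)) //= eqxx mul1n big1 ?addn0 //.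
by move=> i /negbTE ine; rewrite -[_ == _]/(i == Ordinal cn) ine.
Qed.

Lemma counts c : tau_fixed p S -> (c < m)%N -> #|P c| = (1 + (c == 0)%N * r)%N.
Proof.
move=> tf.
have tot := sumP; rewrite cardS in tot.
have key c0 : (c0 < m)%N -> (1 < #|P c0|)%N -> c0 = 0%N.
  move=> cm c1.
  have big := big_pt c1.
  set c' := ((c0 * p) %% m)%N.
  have c'm : (c' < m)%N by rewrite ltn_mod m_gt0.
  have big' : (r + 1 <= #|P c'|)%N := leq_trans big (tau_le c0 tf).
  have [Ec|Nc] := eqVneq c' c0.
    have : (m %| c0 * (p - 1))%N.
      rewrite mulnBr muln1 -eqn_mod_dvd; last by rewrite leq_pmulr ?prime_gt0.
      by rewrite -/c' Ec modn_small.
    rewrite Gauss_dvdl ?coprime_mp // /dvdn modn_small // => /eqP //.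
  have : (m + r + r <= q + 1)%N.
    rewrite -tot.
    have -> : (m + r + r = \sum_(i < m) (1 + (i == c0 :> nat) * r + (i == c' :> nat) * r))%N.
      by rewrite !big_split /= sum1_card card_ord !sum_ind.
    apply: leq_sum => i _.
    have := exists_pt (ltn_ord i).
    case: (eqVneq (i : nat) c0) => [->|ic].
      by move=> _; rewrite eq_sym (negbTE Nc) mul1n mul0n addn0 addnC.
    case: (eqVneq (i : nat) c') => [->|ic'] /=.
      by move=> _; rewrite mul1n mul0n addn0 addnC.
    by rewrite !mul0n !addn0.
  by have := r_ge2; lia.
move=> cm; have pos := exists_pt cm.
have one c0 : (c0 < m)%N -> c0 != 0%N -> #|P c0| = 1%N.
  move=> c0m c00; apply/eqP; rewrite eqn_leq exists_pt // andbT leqNgt.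
  by apply/negP => /(key _ c0m) /eqP; rewrite (negbTE c00).
have [->|c0] := eqVneq c 0%N; last by rewrite one // mul0n addn0.
rewrite mul1n.
have : (\sum_(i < m) #|P i| = \sum_(i < m) (1 + (i == 0 :> nat) * (#|P 0| - 1)))%N.
  apply: eq_bigr => i _; case: (eqVneq (i : nat) 0%N) => [->|i0].
    have h1 : (true * (#|P 0| - 1) = #|P 0| - 1)%N by exact: mul1n.
    by rewrite h1 subnKC // (exists_pt m_gt0).
  by rewrite mul0n addn0 one.
rewrite tot big_split /= sum1_card card_ord sum_ind ?m_gt0 //.
have rq : (r <= q)%N by have := r_ge2; nia.
have := exists_pt m_gt0; move: #|P 0| => x; move: rq; generalize (r ^ 2)%N; move=> qq; lia.
Qed.


Lemma sumPt (t u : nat) : (t %| m)%N ->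
  #|[set i in S | ((i : nat) %% t == u)%N]| = (\sum_(c < m | (c %% t == u)%N) #|P c|)%N.
Proof.
move=> tm.
rewrite -sum1_card (partition_big (fun i : 'I_N => Ordinal (ltn_pmod i m_gt0))
  (fun c : 'I_m => (c %% t == u)%N)) /=; last first.
  by move=> i; rewrite inE => /andP [_]; rewrite modn_dvdm.
apply: eq_bigr => c cu; rewrite sum1dep_card; apply: eq_card => i; rewrite !inE.
rewrite -val_eqE /=.
apply/idP/idP; first by move=> /andP [/andP [-> _] ->].
move=> /andP [iS /eqP ic]; rewrite iS ic eqxx andbT /=.
by rewrite -(modn_dvdm i tm) ic.
Qed.

Lemma main_sec v : (1 <= v)%N -> (v * (q + r + 1) %| N)%N -> tau_fixed p S ->
  let t := (N %/ (v * (q + r + 1)))%N in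
  [/\ (t * v = q - r + 1)%N, wcount t S 0 = (r + v)%N
    & forall u : nat, (0 < u < t)%N -> wcount t S u = v].
Proof.
move=> v1 dv tf t.
have X0 : (0 < q + r + 1)%N by rewrite addn1.
have vm : (v %| m)%N by move: dv; rewrite N_eq [(_ * m)%N]mulnC dvdn_pmul2r.
have tE : t = (m %/ v)%N by rewrite /t N_eq [(_ * m)%N]mulnC divnMr.
have tv : (t * v = m)%N by rewrite tE divnK.
have tm : (t %| m)%N by rewrite -tv dvdn_mulr.
have t0 : (0 < t)%N by move: m_gt0; rewrite -tv muln_gt0 => /andP[].
have W u : (u < t)%N -> wcount t S u =
    (v + \sum_(c < m | (c %% t == u)%N) ((c == 0 :> nat) * r))%N.
  move=> ut; rewrite /wcount sumPt //.
  rewrite (eq_bigr (fun c : 'I_m => 1 + (c == 0 :> nat) * r)%N); last first.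
    by move=> c _; rewrite counts.
  rewrite big_split /= sum1dep_card (@count_res m t v u) //.
split=> //.
  rewrite W // addnC; congr (_ + _)%N.
  rewrite big_mkcond /= -[RHS](@sum_ind m 0 r m_gt0); apply: eq_bigr => c _; case: (eqVneq (c : nat) 0%N) => [->|c0].
    by rewrite mod0n eqxx.
  by rewrite mul0n; case: ifP.
move=> u /andP [u0 ut]; rewrite W // big1 ?addn0 // => c cu.
case: (eqVneq (c : nat) 0%N) => [c0|]; last by rewrite mul0n.
by move: cu; rewrite c0 mod0n eq_sym (negbTE (lt0n_neq0 u0)).
Qed.

End Prop7.

Theorem proposition7 (p h q r v : nat) (F : finFieldType) (alpha : F)
    (L : {set F}) :
  prime p -> (0 < h)%N -> q = (p ^ h)%N ->
  #|F| = (q ^ 3)%N ->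
  (q ^ 3 - 1).-primitive_root alpha ->
  is_Fq_plane q L ->
  tau_fixed p (line_pts q alpha L) ->
  q = (r ^ 2)%N ->
  (1 <= v)%N ->
  (v * (q + r + 1) %| q ^ 2 + q + 1)%N ->
  let t := ((q ^ 2 + q + 1) %/ (v * (q + r + 1)))%N in
  [/\ (t * v = q - r + 1)%N,
      wcount t (line_pts q alpha L) 0 = (r + v)%N
    & forall u : nat, (0 < u < t)%N -> wcount t (line_pts q alpha L) u = v].
Proof.
move=> pr_p h0 qE cardF prim plane tf qr v1 dv.
rewrite qr in qE; subst q.
have [k kh rk] : exists2 k, (k <= h)%N & r = (p ^ k)%N.
  apply/(dvdn_pfactor _ _ pr_p); rewrite -qE expnS; exact: dvdn_mulr (dvdnn r).
have k0 : (0 < k)%N.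
  rewrite lt0n; apply/negP => /eqP k0; move: qE; rewrite rk k0 expn0 exp1n => E.
  have : (p ^ 1 <= p ^ h)%N by rewrite leq_exp2l ?(prime_gt1 pr_p).
  by rewrite -E expn1 leqNgt (prime_gt1 pr_p).
exact: (@main_sec p k r F alpha L pr_p k0 rk cardF prim plane v v1 dv tf).
Qed.
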